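(* Let $Q_{\mathsf{matrix}}(A,C) :- R_1(A,B), R_2(B,C)$ and let $D=(R_1,R_2)$ be any database with $R_2=(\pi_B R_2)\times(\pi_C R_2)$. Then there is a solution to $\mathrm{SWP}(Q_{\mathsf{matrix}},D)$ that is integral, i.e. there is a sub-database $(R_1',R_2')$ with $R_1'\subseteq R_1$, $R_2'\subseteq R_2$, $R_2'=(\pi_B R_2')\times(\pi_C R_2)$, such that $Q_{\mathsf{matrix}}(R_1',R_2')=Q_{\mathsf{matrix}}(D)$ and $|R_1'|+|R_2'|$ is minimum among all sub-databases $D''\subseteq D$ with $Q_{\mathsf{matrix}}(D'')=Q_{\mathsf{matrix}}(D)$.
   Context: For a conjunctive query $Q$ and database $D$ (finite sets of tuples for its relations), $Q(D)$ is the projection onto the output attributes of the natural join of the relations. $\mathrm{SWP}(Q,D)$ asks for a subset $D'\subseteq D$ of tuples with $Q(D')=Q(D)$ and $|D'|$ minimum. $\pi$ denotes projection. *)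

(* Defs.v *)
From HB Require Import structures.
From mathcomp Require Import all_boot.
From mathcomp Require Import finmap.
Set Implicit Arguments. Unset Strict Implicit. Unset Printing Implicit Defensive.
Local Open Scope fset_scope.

Definition Qmatrix (A B C : choiceType) (R1 : {fset A * B}) (R2 : {fset B * C})
  : {fset A * C} :=
  [fset (p.1.1, p.2.2) | p in R1 `*` R2 & p.1.2 == p.2.1].

Definition piB (B C : choiceType) (R2 : {fset B * C}) : {fset B} := [fset p.1 | p in R2].
Definition piC (B C : choiceType) (R2 : {fset B * C}) : {fset C} := [fset p.2 | p in R2].

(* Main.v *)
Require Import Defs.
From HB Require Import structures.
From mathcomp Require Import all_boot.
From mathcomp Require Import finmap.
From Stdlib Require Import ClassicalEpsilon.
Local Open Scope fset_scope.

Lemma fset_argmin (T : choiceType) (K : {fset T}) (f : T -> nat) (x0 : T) :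
  x0 \in K -> exists2 c, c \in K & forall c', c' \in K -> f c <= f c'.
Proof.
move=> x0K.
have ex : exists n, n \in [fset f x | x in K] by exists (f x0); apply: in_imfset.
case: (ex_minnP ex) => m /imfsetP [c /= cK ->] min.
exists c => // c' c'K; apply: min; exact: in_imfset.
Qed.

Lemma Qmono (A B C : choiceType) (R1 S1 : {fset A * B}) (R2 S2 : {fset B * C}) :
  S1 `<=` R1 -> S2 `<=` R2 -> Qmatrix S1 S2 `<=` Qmatrix R1 R2.
Proof.
move=> /fsubsetP h1 /fsubsetP h2; apply/fsubsetP => q /imfsetP [p /=].
rewrite !inE => /andP [/andP [p1 p2] e] ->.
apply/imfsetP; exists p => //=; rewrite !inE e andbT h1 ?h2 //.
Qed.

Lemma inQ (A B C : choiceType) (R1 : {fset A * B}) (R2 : {fset B * C}) a c :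
  reflect (exists b, (a, b) \in R1 /\ (b, c) \in R2) ((a, c) \in Qmatrix R1 R2).
Proof.
apply: (iffP idP).
  case/imfsetP=> [[[a' b] [b' c']]] /=; rewrite !inE /= => /andP [/andP [h1 h2] /eqP e] [-> ->].
  by exists b; subst.
case=> b [h1 h2]; apply/imfsetP; exists ((a, b), (b, c)) => //=; rewrite !inE h1 h2 /=.
by rewrite eqxx.
Qed.

Lemma opt_exists (A B C : choiceType) (R1 : {fset A * B}) (R2 : {fset B * C}) :
  exists S1 S2, [/\ S1 `<=` R1, S2 `<=` R2, Qmatrix S1 S2 = Qmatrix R1 R2 &
     forall T1 T2, T1 `<=` R1 -> T2 `<=` R2 -> Qmatrix T1 T2 = Qmatrix R1 R2 ->
        (#|` S1| + #|` S2| <= #|` T1| + #|` T2|)%N].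
Proof.
pose P n := exists S1 S2, [/\ S1 `<=` R1, S2 `<=` R2, Qmatrix S1 S2 = Qmatrix R1 R2 &
     (#|` S1| + #|` S2|)%N = n].
pose p n := if excluded_middle_informative (P n) then true else false.
have pP n : p n <-> P n by rewrite /p; case: excluded_middle_informative.
have ex : exists n, p n.
  by exists (#|` R1| + #|` R2|)%N; apply/pP; exists R1, R2; split.
case: (ex_minnP ex) => m /pP [S1 [S2 [h1 h2 h3 h4]]] min.
exists S1, S2; split => // T1 T2 t1 t2 t3; rewrite h4; apply: min; apply/pP.
by exists T1, T2.
Qed.
Section S.
Variables (B C : choiceType).
Definition fiber (S : {fset B * C}) (c : C) := [fset p in S | p.2 == c].
Lemma fiber_sum (S : {fset B * C}) (s : seq C) : uniq s ->
  #|` [fset p in S | p.2 \in s]| = \sum_(c <- s) #|` fiber S c|.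
Proof.
elim: s => [|c s IH] /=.
  move=> _; rewrite big_nil; apply/eqP; rewrite cardfs_eq0; apply/eqP/fsetP => p.
  by rewrite !inE andbF.
case/andP=> cs us; rewrite big_cons -IH //.
have -> : [fset p in S | p.2 \in c :: s] = fiber S c `|` [fset p in S | p.2 \in s].
  by apply/fsetP => p; rewrite !inE; case: (p \in S).
have := cardfsUI (fiber S c) [fset p in S | p.2 \in s].
have -> : fiber S c `&` [fset p in S | p.2 \in s] = fset0.
  apply/fsetP => p; rewrite !inE; case: (p \in S); rewrite //=.
  by case: eqP => // ->; rewrite (negbTE cs).
by rewrite cardfs0 addn0.
Qed.
Lemma X_le (S : {fset B * C}) c : #|` [fset p.1 | p in fiber S c]| <= #|` fiber S c|.
Proof. exact: leq_imfset_card. Qed.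
End S.
Arguments fiber {B C}.
Arguments fiber_sum {B C}.
Arguments X_le {B C}.

Theorem lemma21 (A B C : choiceType) (R1 : {fset A * B}) (R2 : {fset B * C}) :
  R2 = piB R2 `*` piC R2 ->
  exists (R1' : {fset A * B}) (R2' : {fset B * C}),
    [/\ R1' `<=` R1, R2' `<=` R2,
        R2' = piB R2' `*` piC R2,
        Qmatrix R1' R2' = Qmatrix R1 R2 &
        forall (S1 : {fset A * B}) (S2 : {fset B * C}),
          S1 `<=` R1 -> S2 `<=` R2 -> Qmatrix S1 S2 = Qmatrix R1 R2 ->
          (#|` R1'| + #|` R2'| <= #|` S1| + #|` S2|)%N].
Proof.
move=> hR2.
have memR2 b c : ((b, c) \in R2) = (b \in piB R2) && (c \in piC R2).
  by rewrite {1}hR2 in_fsetM.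
have piBP (R : {fset B * C}) b : reflect (exists c, (b, c) \in R) (b \in piB R).
  apply: (iffP idP).
    by case/imfsetP => -[b' c] /= h ->; exists c.
  by case=> c h; apply/imfsetP; exists (b, c).
have piCP (R : {fset B * C}) c : reflect (exists b, (b, c) \in R) (c \in piC R).
  apply: (iffP idP).
    by case/imfsetP => -[b c'] /= h ->; exists b.
  by case=> b h; apply/imfsetP; exists (b, c).
case: (@opt_exists _ _ _ R1 R2) => S1 [S2 [s1 s2 s3 s4]].
case: (fset_0Vmem (piC R2)) => [Cs0 | [c0 c0C]].
  have R20 : R2 = fset0.
    apply/fsetP => -[b c]; rewrite memR2 Cs0 !inE andbF; done.
  exists fset0, fset0; split.
  - exact: fsub0set.
  - exact: fsub0set.
  - by apply/fsetP => -[b c]; rewrite in_fsetM Cs0 !inE andbF.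
  - apply/fsetP => -[a c]; apply/idP/idP => /inQ [b [_ h]];
      by move: h; rewrite ?R20 inE.
  - by move=> *; rewrite cardfs0.
pose X c := [fset p.1 | p in fiber S2 c].
have memX c b : (b \in X c) = ((b, c) \in S2).
  apply/idP/idP.
    case/imfsetP => -[b' c'] /=; rewrite !inE /= => /andP [h /eqP e] ->.
    by rewrite -e.
  by move=> h; apply/imfsetP; exists (b, c); rewrite // !inE h /=.
have [c cC cmin] := @fset_argmin _ _ (fun c => #|` X c|) c0 c0C.
have XB : X c `<=` piB R2.
  apply/fsubsetP => b; rewrite memX => /(fsubsetP s2); rewrite memR2.
  by case/andP.
have sub1 : [fset p in S1 | p.2 \in X c] `<=` R1.
  by apply/fsubsetP => p; rewrite !inE => /andP [/(fsubsetP s1) ? _].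
have sub2 : X c `*` piC R2 `<=` R2.
  apply/fsubsetP => -[b c']; rewrite in_fsetM memR2 /= => /andP [h ->].
  by rewrite (fsubsetP XB).
exists [fset p in S1 | p.2 \in X c], (X c `*` piC R2); split => //.
- congr (_ `*` _); apply/fsetP => b; apply/idP/idP.
    by move=> h; apply/piBP; exists c; rewrite in_fsetM h.
  by case/piBP => c'; rewrite in_fsetM => /andP [].
- apply/eqP; rewrite eqEfsubset (@Qmono _ _ _ R1 _ R2) //=.
  apply/fsubsetP => -[a c'] /inQ [b [h1 h2]].
  have c'C : c' \in piC R2 by apply/piCP; exists b.
  have : (a, c) \in Qmatrix R1 R2.
    apply/inQ; exists b; split => //; rewrite memR2 cC andbT.
    by apply/piBP; exists c'.
  rewrite -s3 => /inQ [b' [h1' h2']].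
  apply/inQ; exists b'; rewrite !inE /= h1' memX h2' c'C; done.
move=> T1 T2 t1 t2 t3; apply: leq_trans (s4 _ _ t1 t2 t3).
apply: leq_add.
  by apply: fsubset_leq_card; apply/fsubsetP => p; rewrite !inE => /andP [].
set Cs := piC R2.
have uC : uniq (enum_fset Cs) := fset_uniq Cs.
have E1 : X c `*` Cs = [fset p in X c `*` Cs | p.2 \in enum_fset Cs].
  apply/fsetP => p; rewrite !inE. by rewrite -andbA andbb.
rewrite E1 fiber_sum //.
apply: (@leq_trans (\sum_(c' <- enum_fset Cs) #|` fiber S2 c'|)).
  rewrite big_seq [X in _ <= X]big_seq; apply: leq_sum => c' c'C.
  apply: (@leq_trans #|` X c'|); last exact: X_le.
  apply: (@leq_trans #|` X c|); last exact: cmin.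
  have -> : fiber (X c `*` Cs) c' = [fset (x, c') | x in X c].
    apply/fsetP => -[b d]; rewrite !inE /=; apply/idP/idP.
      case/andP => /andP [hb _] /eqP ->; apply/imfsetP; exists b => //.
    case/imfsetP => x /= hx [-> ->]; rewrite hx /= eqxx andbT.
    exact: c'C.
  by rewrite card_imfset // => x y [].
rewrite -fiber_sum //; apply: fsubset_leq_card.
by apply/fsubsetP => p; rewrite !inE => /andP [].
Qed.
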